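(* Let $R$ be an integral domain of characteristic zero, $n,d\ge1$, $F\in R[x]_d$, and $G=x_0^d+\cdots+x_n^d$. Let $s\ge1$, $h\ge(d-1)(n+1)+1$, $v\in B_{ds}$ and $w\in B_h$. For $k\ge1$ and $H\in R[x]_{kds}$ let $[H]_k$ denote the vector $(H_{kv+w-t})_{t\in B_h}$. Then there is a matrix $Q$, with rows and columns indexed by $B_h$ and entries that are polynomials of degree at most $1$ in $R[k,\ell]$, such that for all integers $k_0\ge1$ and $0\le\ell_0<k_0s$, $$d(k_0s-\ell_0)\,[G^{k_0s-\ell_0-1}F^{\ell_0+1}]_{k_0}=Q(k_0,\ell_0)\,[G^{k_0s-\ell_0}F^{\ell_0}]_{k_0},$$ and consequently, for all $k_0\ge1$, in the fraction field of $R$, $$[F^{k_0s}]_{k_0}=\frac{1}{d^{k_0s}(k_0s)!}\,Q(k_0,k_0s-1)\cdots Q(k_0,1)Q(k_0,0)\,[G^{k_0s}]_{k_0}.$$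
   Context: $R[x]=R[x_0,\dots,x_n]$; $R[x]_k$ is the submodule of homogeneous polynomials of degree $k$; $B_k=\{u\in\mathbf N^{n+1}:u_0+\cdots+u_n=k\}$; for $H\in R[x]$ and $u\in\mathbf Z^{n+1}$, $H_u$ is the coefficient of $x^u=x_0^{u_0}\cdots x_n^{u_n}$ in $H$, with $H_u=0$ if some $u_i<0$. *)

(* Defs.v *)
(* Multivariate polynomials in x_0..x_n are not in the library;
   we represent an element of R[x_0..x_n] by its coefficient function on
   exponent vectors (monomials) u : {ffun 'I_n.+1 -> nat}. *)
From HB Require Import structures.
From mathcomp Require Import all_boot all_order all_algebra fraction.
Set Implicit Arguments. Unset Strict Implicit. Unset Printing Implicit Defensive.
Import Order.TTheory GRing.Theory Num.Theory.
Local Open Scope ring_scope.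

Definition mon (n : nat) := {ffun 'I_n.+1 -> nat}.
Definition mdeg n (u : mon n) : nat := (\sum_i u i)%N.
Definition mpoly (R : nzRingType) (n : nat) := mon n -> R.

Definition homog (R : nzRingType) n (H : mpoly R n) (d : nat) : Prop :=
  forall u : mon n, mdeg u <> d -> H u = 0.

Definition mpmul (R : nzRingType) n (P Q : mpoly R n) : mpoly R n :=
  fun u => \sum_(f : {ffun 'I_n.+1 -> 'I_(mdeg u).+1} | [forall i, (f i <= u i)%N])
             P [ffun i => nat_of_ord (f i)] * Q [ffun i => (u i - f i)%N].

Definition mpone (R : nzRingType) n : mpoly R n :=
  fun u => if mdeg u == 0%N then 1 else 0.

Definition mppow (R : nzRingType) n (P : mpoly R n) (k : nat) : mpoly R n :=
  iter k (@mpmul R n P) (@mpone R n).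

Definition monX n (i : 'I_n.+1) (e : nat) : mon n :=
  [ffun j => if j == i then e else 0%N].

Definition Gpoly (R : nzRingType) n (d : nat) : mpoly R n :=
  fun u => \sum_(i < n.+1) ((u == monX i d)%:R : R).

Definition Bset (n h : nat) :=
  {f : {ffun 'I_n.+1 -> 'I_h.+1} | (\sum_i nat_of_ord (f i))%N == h}.
Definition monB n h (t : Bset n h) : mon n := [ffun i => nat_of_ord (val t i)].

(* coefficient H_u for u in Z^{n+1}, given as k v + w - t (0 if some entry < 0) *)
Definition coefkvwt (R : nzRingType) n (H : mpoly R n) (k : nat) (v w t : mon n) : R :=
  if [forall i, (t i <= k * v i + w i)%N]
  then H [ffun i => (k * v i + w i - t i)%N] else 0.

Definition bvec (R : nzRingType) n h (H : mpoly R n) (k : nat) (v w : mon n)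
  : Bset n h -> R := fun t => coefkvwt H k v w (monB t).

Definition mxv (K : nzRingType) n h (M : Bset n h -> Bset n h -> K) (x : Bset n h -> K)
  : Bset n h -> K := fun t => \sum_(s : Bset n h) M t s * x s.

(* Q(k0,l) with Q = A + k B + l C (entries of degree <= 1 in R[k,l]) *)
Definition Qeval (K : nzRingType) n h (A B C : Bset n h -> Bset n h -> K) (k l : nat)
  : Bset n h -> Bset n h -> K := fun t s => A t s + k%:R * B t s + l%:R * C t s.

Fixpoint chain (K : nzRingType) n h (Q : nat -> Bset n h -> Bset n h -> K)
  (x0 : Bset n h -> K) (j : nat) : Bset n h -> K :=
  match j with
  | 0 => x0
  | j'.+1 => mxv (Q j') (chain Q x0 j')
  end.

Definition toF (R : idomainType) (x : R) : {fraction R} := @FracField.tofrac R x.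

(* Main.v *)
Require Import Defs.
From HB Require Import structures.
From mathcomp Require Import all_boot all_order all_algebra fraction.
From mathcomp Require Import ring zify.
From mathcomp.multinomials Require mpoly.
Import Order.TTheory GRing.Theory Num.Theory.
Local Open Scope ring_scope.
Set Implicit Arguments. Unset Strict Implicit. Unset Printing Implicit Defensive.

Module Aux.
Import mathcomp.multinomials.mpoly.
Section S1.
Variable (R : idomainType) (n : nat).

Definition conv (u : mon n) : 'X_{1..n.+1} := [multinom u i | i < n.+1].
Definition mon_of (m : 'X_{1..n.+1}) : mon n := [ffun i => m i].

Lemma convE u i : conv u i = u i.
Proof. by rewrite mnmE. Qed.

Lemma conv_mon_of m : conv (mon_of m) = m.
Proof. by apply/mnmP => i; rewrite convE ffunE. Qed.

Lemma mon_of_conv u : mon_of (conv u) = u.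
Proof. by apply/ffunP => i; rewrite ffunE convE. Qed.

Lemma conv_mdeg u : mdeg (conv u) = Defs.mdeg u.
Proof. by rewrite mdegE /Defs.mdeg; apply: eq_bigr => i _; rewrite convE. Qed.

Lemma mnm_le_mdeg (m : 'X_{1..n.+1}) i : (m i <= mdeg m)%N.
Proof. by rewrite mdegE (bigD1 i) //= leq_addr. Qed.

Definition rep (P : Defs.mpoly R n) (p : {mpoly R[n.+1]}) := forall u, P u = p@_(conv u).

Lemma mcoeffML (p q : {mpoly R[n.+1]}) m :
  (p * q)@_m = \sum_(k : 'X_{1..n.+1 < (mdeg m).+1} | (k <= m)%MM) p@_k * q@_(m - k).
Proof. exact: mcoeff_poly_mul_lin. Qed.

Lemma bm_lt (b : nat) (k : 'X_{1..n.+1 < b}) i : (k i < b)%N.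
Proof. exact: leq_ltn_trans (mnm_le_mdeg k i) (bmdeg k). Qed.

Lemma rep_mul P Q p q : rep P p -> rep Q q -> rep (mpmul P Q) (p * q).
Proof.
move=> hP hQ u; rewrite mcoeffML /mpmul conv_mdeg.
set b := (Defs.mdeg u).+1.
rewrite (reindex (fun k : 'X_{1..n.+1 < b} => [ffun i => (inord (k i) : 'I_b)])) /=.
  apply: eq_big => [k|k _].
    apply/forallP/forallP => H i; move: (H i); rewrite ?ffunE inordK ?bm_lt //;
      by rewrite convE.
  rewrite hP hQ; congr (_ * _); [congr (mcoeff _ _)|congr (mcoeff _ _)]; apply/mnmP => i;
    by rewrite ?mnmBE !convE !ffunE /= inordK ?bm_lt.
have hdeg (f : {ffun 'I_n.+1 -> 'I_b}) : [forall i, (f i <= u i)%N] ->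
    (mdeg [multinom (f i : nat) | i < n.+1] < b)%N.
  move/forallP => H; rewrite mdegE ltnS /Defs.mdeg; apply: leq_sum => i _.
  by rewrite mnmE.
exists (fun f : {ffun 'I_n.+1 -> 'I_b} => insubd (bm0 : 'X_{1..n.+1 < b}) [multinom (f i : nat) | i < n.+1]).
  move=> k _; apply: val_inj => /=; rewrite insubdK.
    by apply/mnmP => i; rewrite mnmE ffunE inordK ?bm_lt.
  rewrite -topredE /= (_ : [multinom _ | i < n.+1] = val k) ?bmdeg //.
  by apply/mnmP => i; rewrite mnmE ffunE inordK ?bm_lt.
move=> f Hf; apply/ffunP => i; rewrite ffunE insubdK ?mnmE ?inord_val //.
by rewrite -topredE /=; apply: hdeg.
Qed.
Lemma rep_one : rep (@mpone R n) 1.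
Proof.
move=> u; rewrite /mpone mcoeff1 -conv_mdeg mdeg_eq0.
by case: (_ == _).
Qed.

Lemma rep_pow P p k : rep P p -> rep (mppow P k) (p ^+ k).
Proof.
move=> hP; elim: k => [|k IH]; first by rewrite expr0; exact: rep_one.
by rewrite exprS; apply: rep_mul.
Qed.

Lemma rep_eq P Q p : rep P p -> rep Q p -> forall u, P u = Q u.
Proof. by move=> hP hQ u; rewrite hP hQ. Qed.

Definition pG (d : nat) : {mpoly R[n.+1]} := \sum_(i < n.+1) 'X_[(U_(i) *+ d)%MM].

Lemma monX_conv d i u : (u == monX i d) = ((U_(i) *+ d)%MM == conv u).
Proof.
apply/eqP/eqP => [->|H].
  by apply/mnmP => j; rewrite mulmnE mnm1E convE ffunE eq_sym; case: (_ == _); rewrite ?mul1n.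
apply/ffunP => j; rewrite ffunE -convE -H mulmnE mnm1E eq_sym.
by case: (_ == _); rewrite ?mul1n.
Qed.

Lemma rep_G d : rep (@Gpoly R n d) (pG d).
Proof.
move=> u; rewrite /Gpoly /pG (big_morph (mcoeff (conv u)) (@mcoeffD _ _ _) (mcoeff0 _ _)).
by apply: eq_bigr => i _; rewrite mcoeffX monX_conv.
Qed.

Definition pF (d : nat) (F : Defs.mpoly R n) : {mpoly R[n.+1]} :=
  \sum_(a : 'X_{1..n.+1 < d.+1}) F (mon_of a) *: 'X_[a].

Lemma rep_F d F : Defs.homog F d -> rep F (pF d F).
Proof.
move=> hF u; rewrite /pF (big_morph (mcoeff (conv u)) (@mcoeffD _ _ _) (mcoeff0 _ _)).
under eq_bigr do rewrite mcoeffZ mcoeffX.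
case: (ltnP (mdeg (conv u)) d.+1) => hu.
  rewrite (bigD1 (BMultinom hu)) //= eqxx mulr1 mon_of_conv big1 ?addr0 //.
  by move=> a; rewrite -val_eqE /= => /negbTE ->; rewrite mulr0.
rewrite hF ?big1 // => [a _|].
  rewrite (_ : (_ == _) = false) ?mulr0 //; apply/negbTE; apply: contraTneq hu.
  by move=> <-; rewrite -ltnNge bmdeg.
by rewrite -conv_mdeg => hd; move: hu; rewrite hd ltnn.
Qed.
Section Der.
Variable j : 'I_n.+1.

Definition Dj (p : {mpoly R[n.+1]}) : {mpoly R[n.+1]} :=
  \sum_(m <- msupp p) (p@_m * (m j)%:R) *: 'X_[m].

Lemma mcoeffDj p k : (Dj p)@_k = p@_k * (k j)%:R.
Proof.
rewrite /Dj (big_morph (mcoeff k) (@mcoeffD _ _ _) (mcoeff0 _ _)).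
under eq_bigr do rewrite mcoeffZ mcoeffX.
case: (boolP (k \in msupp p)) => hk.
  rewrite (bigD1_seq k) ?msupp_uniq //= eqxx mulr1 big1 ?addr0 //.
  by move=> m /negbTE ->; rewrite mulr0.
rewrite big1_seq ?(memN_msupp_eq0 hk) ?mul0r // => m /andP [_ hm].
case: eqP => [e|]; last by rewrite mulr0.
by rewrite -e hm in hk.
Qed.

Lemma Dj_mul p q : Dj (p * q) = Dj p * q + p * Dj q.
Proof.
apply/mpolyP => m; rewrite mcoeffD mcoeffDj !mcoeffML mulr_suml -big_split /=.
apply: eq_bigr => k /mnm_lepP hk; rewrite !mcoeffDj mnmBE.
rewrite -{1}(subnKC (hk j)) natrD; ring.
Qed.

Lemma Dj_pow p k : Dj (p ^+ k.+1) = k.+1%:R * p ^+ k * Dj p.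
Proof.
elim: k => [|k IH]; first by rewrite expr1 expr0 mulr1 mul1r.
rewrite exprS Dj_mul IH -[k.+2]addn1 natrD exprS; ring.
Qed.

Lemma Dj_G d : Dj (pG d) = d%:R * 'X_[(U_(j) *+ d)%MM].
Proof.
apply/mpolyP => m; rewrite mcoeffDj -mpolyC_nat mcoeffCM mcoeffX /pG.
rewrite (big_morph (mcoeff m) (@mcoeffD _ _ _) (mcoeff0 _ _)) mulr_suml.
rewrite (bigD1 j) //= big1 ?addr0 => [|i hij].
  rewrite mcoeffX; case: eqP => [<-|]; rewrite ?mul0r ?mulr0 //.
  by rewrite mulmnE mnm1E eqxx mul1n mul1r mulr1.
rewrite mcoeffX; case: eqP => [<-|]; rewrite ?mul0r //.
by rewrite mulmnE mnm1E (negbTE hij) mul0n mulr0.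
Qed.

Lemma mcoeffMX' (p : {mpoly R[n.+1]}) (a U : 'X_{1..n.+1}) : (p * 'X_[a])@_U = if (a <= U)%MM then p@_(U - a) else 0.
Proof.
case: ifP => ha.
  by rewrite -{1}(submK ha) addmC mcoeffMX.
rewrite mcoeffML big1 // => k hk; rewrite mcoeffX.
case: eqP => [e|]; last by rewrite mulr0.
by rewrite e lem_subr in ha.
Qed.

Lemma key_poly (d m l : nat) (g f X : {mpoly R[n.+1]}) : Dj g = d%:R * X ->
  (d * m.+1)%:R * (g ^+ m * f ^+ l.+1 * X) =
  Dj (g ^+ m.+1 * f ^+ l * f) - l.+1%:R * (g ^+ m.+1 * f ^+ l * Dj f).
Proof.
move=> hg; rewrite -[g ^+ m.+1 * f ^+ l * f]mulrA -exprSr Dj_mul !Dj_pow hg natrM.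
rewrite exprSr; ring.
Qed.

Lemma mcoeffM_sumX (b : nat) (p : {mpoly R[n.+1]}) (c : 'X_{1..n.+1 < b} -> R) U :
  (p * \sum_a c a *: 'X_[val a])@_U =
  \sum_a c a * (if (val a <= U)%MM then p@_(U - a) else 0).
Proof.
rewrite mulr_sumr (big_morph (mcoeff U) (@mcoeffD _ _ _) (mcoeff0 _ _)).
by apply: eq_bigr => a _; rewrite -scalerAr mcoeffZ mcoeffMX'.
Qed.

Lemma Dj_pF d F : Dj (pF d F) = \sum_(a : 'X_{1..n.+1 < d.+1}) (F (mon_of a) * (a j)%:R) *: 'X_[val a].
Proof.
apply/mpolyP => m; rewrite mcoeffDj /pF !(big_morph (mcoeff m) (@mcoeffD _ _ _) (mcoeff0 _ _)).
rewrite mulr_suml; apply: eq_bigr => a _; rewrite !mcoeffZ mcoeffX.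
by case: eqP => [<-|]; rewrite ?mulr0 ?mul0r ?mulr1.
Qed.

End Der.
End S1.

Section S2.
Variable (R : idomainType) (n d h : nat) (F : Defs.mpoly R n) (v w : mon n).

Definition jof (t : Bset n h) : 'I_n.+1 := odflt ord0 [pick i | (d <= monB t i)%N].

Lemma jof_ge t : ((d - 1) * (n + 1) + 1 <= h)%N -> (d <= monB t (jof t))%N.
Proof.
move=> hh; rewrite /jof; case: pickP => [i //|H].
have : (h <= \sum_(i < n.+1) (d - 1))%N.
  move: H; case: t => f /= hf H; rewrite -{1}(eqP hf); apply: leq_sum => i _.
  by move: (H i); rewrite /monB ffunE /= => /negbT; rewrite -ltnNge; lia.
rewrite sum_nat_const card_ord; lia.
Qed.

Definition dl (t : Bset n h) i : nat := if i == jof t then d else 0%N.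

Definition shift (t : Bset n h) (a : 'X_{1..n.+1}) : mon n :=
  [ffun i => (monB t i - dl t i + a i)%N].

Definition ind (t s : Bset n h) (a : 'X_{1..n.+1}) : R := (monB s == shift t a)%:R.

Definition Am (t s : Bset n h) : R := \sum_(a : 'X_{1..n.+1 < d.+1})
  ind t s a * (((w (jof t) + d)%:R - (monB t (jof t))%:R - (a (jof t))%:R) * F (mon_of a)).
Definition Bm (t s : Bset n h) : R := \sum_(a : 'X_{1..n.+1 < d.+1})
  ind t s a * ((v (jof t))%:R * F (mon_of a)).
Definition Cm (t s : Bset n h) : R := \sum_(a : 'X_{1..n.+1 < d.+1})
  ind t s a * (- ((a (jof t))%:R * F (mon_of a))).

Definition coefQ (k l : nat) (t : Bset n h) (a : 'X_{1..n.+1}) : R :=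
  ((w (jof t) + d)%:R - (monB t (jof t))%:R - (a (jof t))%:R
    + k%:R * (v (jof t))%:R - l%:R * (a (jof t))%:R) * F (mon_of a).

Lemma Qeval_sum k l t s : Qeval Am Bm Cm k l t s =
  \sum_(a : 'X_{1..n.+1 < d.+1}) ind t s a * coefQ k l t a.
Proof.
rewrite /Qeval /Am /Bm /Cm !mulr_sumr -!big_split /=; apply: eq_bigr => a _.
rewrite /coefQ; ring.
Qed.

Lemma sumB (x : mon n) (g : mon n -> R) :
  \sum_(s : Bset n h) (monB s == x)%:R * g (monB s) = (Defs.mdeg x == h)%:R * g x.
Proof.
case: (boolP (Defs.mdeg x == h)) => hx.
  have hxi i : (x i < h.+1)%N.
    by rewrite ltnS -(eqP hx) /Defs.mdeg (bigD1 i) //= leq_addr.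
  pose f0 : {ffun 'I_n.+1 -> 'I_h.+1} := [ffun i => inord (x i)].
  have hs0 : (\sum_i nat_of_ord (f0 i) == h)%N.
    by apply/eqP; apply: (etrans _ (eqP hx)); apply/eq_bigr => i _; rewrite ffunE inordK.
  have e0 : monB (exist (fun f : {ffun 'I_n.+1 -> 'I_h.+1} => (\sum_i nat_of_ord (f i) == h)%N) f0 hs0 : Bset n h) = x.
    by apply/ffunP => i; rewrite /monB !ffunE /= inordK.
  rewrite (bigD1 (exist (fun f : {ffun 'I_n.+1 -> 'I_h.+1} => (\sum_i nat_of_ord (f i) == h)%N) f0 hs0 : Bset n h)) //= e0 eqxx mul1r big1 ?addr0 //.
  move=> s hs; rewrite (_ : (monB s == x) = false) ?mul0r //; apply/negbTE.
  apply: contra hs; rewrite -e0 => /eqP e; apply/eqP/val_inj/ffunP => i.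
  by apply/val_inj; move/ffunP: e => /(_ i); rewrite /monB !ffunE.
rewrite big1 ?mul0r // => s _; case: eqP => [e|]; last by rewrite mul0r.
exfalso; move/negP: hx; apply; rewrite -e /Defs.mdeg.
by apply/eqP; apply: (etrans _ (eqP (valP s))); apply/eq_bigr => i _; rewrite ffunE.
Qed.

Lemma mdeg_shift t (a : 'X_{1..n.+1}) : (d <= monB t (jof t))%N ->
  (Defs.mdeg (shift t a) + d = h + mdeg a)%N.
Proof.
move=> hj; rewrite /Defs.mdeg mdegE.
have -> : (\sum_i shift t a i = \sum_i (monB t i - dl t i) + \sum_i a i)%N.
  by rewrite -big_split; apply: eq_bigr => i _; rewrite ffunE.
have : (\sum_i monB t i = h)%N.
  by apply: (etrans _ (eqP (valP t))); apply/eq_bigr => i _; rewrite ffunE.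
rewrite (bigD1 (jof t)) //= [X in (X + _ + _)%N](bigD1 (jof t)) //=.
have -> : (\sum_(i < n.+1 | i != jof t) (monB t i - dl t i) = \sum_(i < n.+1 | i != jof t) monB t i)%N.
  by apply: eq_bigr => i /negbTE hi; rewrite /dl hi subn0.
rewrite /dl eqxx => e.
have key (x y z : nat) : (d <= x)%N -> (x - d + y + z + d = (x + y) + z)%N by lia.
by rewrite key // e.
Qed.

Lemma mxv_Q k l (P : Defs.mpoly R n) t : Defs.homog F d -> (d <= monB t (jof t))%N ->
  mxv (Qeval Am Bm Cm k l) (bvec P k v w) t =
  \sum_(a : 'X_{1..n.+1 < d.+1}) coefQ k l t a * coefkvwt P k v w (shift t a).
Proof.
move=> hF hj; rewrite /mxv.
under eq_bigr do rewrite Qeval_sum mulr_suml.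
rewrite exchange_big /=; apply: eq_bigr => a _.
under eq_bigr do rewrite /ind mulrAC.
rewrite -mulr_suml.
rewrite (sumB (shift t a) (fun x => coefkvwt P k v w x)).
case: (boolP (mdeg a == d)) => ha.
  have -> : Defs.mdeg (shift t a) == h.
    by apply/eqP; move: (mdeg_shift a hj); rewrite (eqP ha); lia.
  by rewrite mul1r mulrC.
rewrite /coefQ hF ?mulr0 ?mul0r //.
rewrite /Defs.mdeg => e; move/negP: ha; apply.
by apply/eqP; rewrite mdegE; apply: (etrans _ e); apply/eq_bigr => i _; rewrite ffunE.
Qed.

Lemma dl_le t i : (d <= monB t (jof t))%N -> (dl t i <= monB t i)%N.
Proof. by rewrite /dl; case: eqP => [->|]. Qed.

Lemma core (k l M : nat) (P P' : Defs.mpoly R n) (pP pP' : {mpoly R[n.+1]}) t :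
  (0 < d)%N -> Defs.homog F d -> (d <= monB t (jof t))%N ->
  rep P pP -> rep P' pP' ->
  M%:R * (pP' * 'X_[(U_(jof t) *+ d)%MM]) =
    Dj (jof t) (pP * pF d F) - l.+1%:R * (pP * Dj (jof t) (pF d F)) ->
  M%:R * coefkvwt P' k v w (monB t) =
  \sum_(a : 'X_{1..n.+1 < d.+1}) coefQ k l t a * coefkvwt P k v w (shift t a).
Proof.
move=> d0 hF hj hP hP' hid.
have hdl i := dl_le i hj.
have hdlj : dl t (jof t) = d by rewrite /dl eqxx.
have hdln i : i != jof t -> dl t i = 0%N by rewrite /dl => /negbTE ->.
case: (boolP [forall i, monB t i <= k * v i + w i + dl t i]%N) => cond; last first.
  rewrite /coefkvwt ifF ?mulr0; last first.
    apply: contraNF cond => /forallP H; apply/forallP => i; move: (H i); lia.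
  rewrite big1 // => a _; rewrite ifF ?mulr0 //.
  move: cond; rewrite negb_forall => /existsP [i hi].
  apply/negbTE; rewrite negb_forall; apply/existsP; exists i.
  move: hi (hdl i); rewrite /shift !ffunE -!ltnNge; lia.
pose U := conv [ffun i => (k * v i + w i + dl t i - monB t i)%N].
have hU i : U i = (k * v i + w i + dl t i - monB t i)%N by rewrite convE ffunE.
have condi i : (monB t i <= k * v i + w i + dl t i)%N by move/forallP: cond.
have L1 : coefkvwt P' k v w (monB t) = (pP' * 'X_[(U_(jof t) *+ d)%MM])@_U.
  rewrite mcoeffMX' /coefkvwt.
  have -> : [forall i, monB t i <= k * v i + w i]%N = (U_(jof t) *+ d <= U)%MM.
    apply/forallP/mnm_lepP => H i; rewrite ?mulmnE ?mnm1E ?hU.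
      case: (eqVneq (jof t) i) => [e|ne]; last by rewrite mul0n.
      by move: (H i) (condi i); rewrite -e hdlj mul1n; lia.
    case: (eqVneq i (jof t)) => [e|ne].
      move: (H (jof t)) (condi (jof t)); rewrite mulmnE mnm1E eqxx hU hdlj -e.
      by rewrite mul1n; lia.
    by move: (condi i); rewrite hdln // addn0.
  case: ifP => // hle; rewrite hP'; congr mcoeff; apply/mnmP => i.
  rewrite mnmBE convE ffunE hU mulmnE mnm1E.
  move/mnm_lepP: hle => /(_ i); rewrite mulmnE mnm1E hU.
  case: (eqVneq (jof t) i) => [e|ne].
    by rewrite -e hdlj mul1n; move: (condi (jof t)); rewrite hdlj; lia.
  by rewrite mul0n hdln 1?eq_sym // addn0 subn0.
rewrite L1 -mcoeffCM mpolyC_nat hid mcoeffB mcoeffDj.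
rewrite -mpolyC_nat mcoeffCM Dj_pF /pF !mcoeffM_sumX mulr_suml mulr_sumr -sumrB.
apply: eq_bigr => a _.
rewrite /coefkvwt.
have -> : [forall i, shift t a i <= k * v i + w i]%N = (val a <= U)%MM.
  apply/forallP/mnm_lepP => H i; move: (H i) (condi i) (hdl i); rewrite ?hU /shift !ffunE;
  try change (\val a) with (bmnm a); lia.
case: ifP => ha; last by rewrite !mulr0 mul0r subrr.
have -> : P [ffun i => (k * v i + w i - shift t a i)%N] = pP@_(U - val a).
  rewrite hP; congr mcoeff; apply/mnmP => i; rewrite mnmBE convE !ffunE hU.
  by move/mnm_lepP: ha => /(_ i); move: (condi i) (hdl i); rewrite hU; try change (\val a) with (bmnm a); rewrite /monB ?ffunE; lia.
have -> : (U (jof t))%:R = (k * v (jof t) + (w (jof t) + d))%:R - (monB t (jof t))%:R :> R.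
  rewrite hU hdlj natrB ?addnA //; move: (condi (jof t)); rewrite hdlj; lia.
rewrite /coefQ natrD natrM; ring.
Qed.

End S2.

Lemma part1 (R : idomainType) (n d : nat) (hd : (1 <= d)%N)
  (F : Defs.mpoly R n) (hF : Defs.homog F d)
  (s h : nat) (hh : ((d - 1) * (n + 1) + 1 <= h)%N) (v w : mon n) :
  forall k0 l0 : nat, (1 <= k0)%N -> (l0 < k0 * s)%N ->
       forall t : Bset n h,
         ((d * (k0 * s - l0))%N)%:R *
           bvec (mpmul (mppow (@Gpoly R n d) (k0 * s - l0 - 1)) (mppow F l0.+1)) k0 v w t
         = mxv (Qeval (@Am R n d h F w) (@Bm R n d h F v) (@Cm R n d h F) k0 l0)
             (bvec (mpmul (mppow (@Gpoly R n d) (k0 * s - l0)) (mppow F l0)) k0 v w) t.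
Proof.
move=> k l hk hl t.
have hj := @jof_ge n d h t hh.
rewrite mxv_Q //.
set m := (k * s - l - 1)%N.
have em : (k * s - l = m.+1)%N by rewrite /m; lia.
rewrite em /bvec.
apply: (@core R n d h F v w k l (d * m.+1) _ _
  (pG R n d ^+ m.+1 * pF d F ^+ l) (pG R n d ^+ m * pF d F ^+ l.+1)) => //.
- apply: rep_mul; [apply: rep_pow; exact: rep_G|apply: rep_pow; exact: rep_F].
- apply: rep_mul; [apply: rep_pow; exact: rep_G|apply: rep_pow; exact: rep_F].
apply: key_poly; exact: Dj_G.
Qed.

Lemma chain_ind (R : idomainType) n h (Q : nat -> Bset n h -> Bset n h -> R)
  (Q' : nat -> Bset n h -> Bset n h -> {fraction R}) (X : nat -> Bset n h -> R)
  (x0 : Bset n h -> {fraction R}) (c : nat -> R) (N : nat) :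
  (forall l a b, Q' l a b = toF (Q l a b)) ->
  (forall u, x0 u = toF (X 0%N u)) ->
  (forall l, (l < N)%N -> forall t, c l * X l.+1 t = mxv (Q l) (X l) t) ->
  forall j, (j <= N)%N -> forall t,
    chain Q' x0 j t = toF (\prod_(l < j) c l) * toF (X j t).
Proof.
move=> hQ hx hrec; elim => [|j IH] hj t /=.
  by rewrite big_ord0 /toF rmorph1 mul1r hx.
transitivity (toF (\prod_(l < j) c l) * toF (mxv (Q j) (X j) t)).
  rewrite /mxv /toF rmorph_sum mulr_sumr; apply: eq_bigr => s _.
  rewrite IH ?(ltnW hj) // hQ /toF rmorphM mulrCA.
  done.
by rewrite -hrec // big_ord_recr /= /toF !rmorphM mulrA.
Qed.

Lemma mpmul1 (R : idomainType) n (P : Defs.mpoly R n) p : rep P p ->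
  forall u, mpmul P (@mpone R n) u = P u.
Proof. by move=> hP; apply: rep_eq (rep_mul hP (@rep_one R n)) _; rewrite mulr1. Qed.

Lemma mul1mp (R : idomainType) n (P : Defs.mpoly R n) p : rep P p ->
  forall u, mpmul (@mpone R n) P u = P u.
Proof. by move=> hP; apply: rep_eq (rep_mul (@rep_one R n) hP) _; rewrite mul1r. Qed.

Lemma prod_fact N : (\prod_(l < N) (N - l) = N`!)%N.
Proof.
rewrite (reindex_inj rev_ord_inj) /=.
under eq_bigr do rewrite subKn ?ltn_ord //.
elim: N => [|N IH]; first by rewrite big_ord0.
by rewrite big_ord_recr /= IH factS mulnC.
Qed.

End Aux.

Unset Implicit Arguments.
Theorem theorem4p1 (R : idomainType) (charR0 : [pchar R] =i pred0)
  (n d : nat) (hn : (1 <= n)%N) (hd : (1 <= d)%N)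
  (F : mpoly R n) (hF : homog F d)
  (s h : nat) (hs : (1 <= s)%N) (hh : ((d - 1) * (n + 1) + 1 <= h)%N)
  (v w : mon n) (hv : mdeg v = (d * s)%N) (hw : mdeg w = h) :
  exists A B C : Bset n h -> Bset n h -> R,
    (forall k0 l0 : nat, (1 <= k0)%N -> (l0 < k0 * s)%N ->
       forall t : Bset n h,
         ((d * (k0 * s - l0))%N)%:R *
           bvec (mpmul (mppow (@Gpoly R n d) (k0 * s - l0 - 1)) (mppow F l0.+1)) k0 v w t
         = mxv (Qeval A B C k0 l0)
             (bvec (mpmul (mppow (@Gpoly R n d) (k0 * s - l0)) (mppow F l0)) k0 v w) t)
    /\
    (forall k0 : nat, (1 <= k0)%N ->
       forall t : Bset n h,
         toF (bvec (mppow F (k0 * s)) k0 v w t)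
         = (((d ^ (k0 * s) * (k0 * s)`!)%N)%:R : {fraction R})^-1 *
           chain (fun l => Qeval (fun a b => toF (A a b)) (fun a b => toF (B a b))
                                 (fun a b => toF (C a b)) k0 l)
                 (fun u => toF (bvec (mppow (@Gpoly R n d) (k0 * s)) k0 v w u))
                 (k0 * s) t).
Proof.
exists (@Aux.Am R n d h F w), (@Aux.Bm R n d h F v), (@Aux.Cm R n d h F).
have P1 := @Aux.part1 R n d hd F hF s h hh v w.
split; first exact: P1.
move=> k hk t.
set N := (k * s)%N.
have repG := Aux.rep_pow N (@Aux.rep_G R n d).
have repF := Aux.rep_pow N (Aux.rep_F hF).
rewrite (@Aux.chain_ind R n h (fun l => Qeval (@Aux.Am R n d h F w) (@Aux.Bm R n d h F v) (@Aux.Cm R n d h F) k l)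
  _ (fun l => bvec (mpmul (mppow (@Gpoly R n d) (N - l)) (mppow F l)) k v w) _
  (fun l => ((d * (N - l))%N)%:R) N _ _ _ N (leqnn N) t).
- rewrite /bvec /coefkvwt subnn /= (Aux.mul1mp repF).
  rewrite -natr_prod big_split /= prod_nat_const card_ord Aux.prod_fact.
  have nz : ((d ^ N * N`!)%N)%:R != 0 :> R.
    rewrite (proj1 (pcharf0P _) charR0) -lt0n.
    by rewrite muln_gt0 expn_gt0 hd fact_gt0.
  have e : ((d ^ N * N`!)%N)%:R = toF (((d ^ N * N`!)%N)%:R : R) by rewrite /toF rmorph_nat.
  by rewrite e mulKf // /toF tofrac_eq0.
- by move=> l a b; rewrite /Qeval /toF !rmorphD !rmorphM !rmorph_nat.
- by move=> u; rewrite /bvec /coefkvwt subn0 /= (Aux.mpmul1 repG).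
- move=> l hl u; rewrite -P1 //; do 4 f_equal; rewrite /N; lia.
Qed.
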